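(* Let $K$ be a $d_1$-standard knot. Then the HOMFLY-PT $S$-invariant $S(K)$, and the rank of $d_1$ in each trigrading, are completely determined by the trigraded vector space $\mathcal{H}(K)$ (i.e. by the dimensions $\dim\mathcal{H}^{q,a,t}(K)$).
   Context: For a knot $K$, $\mathcal{H}(K)$ is reduced triply graded (HOMFLY-PT) Khovanov–Rozansky homology over $\mathbb{Q}$, a finite-dimensional space graded by even gradings $(q,a,t)$; $\Delta=q+a+t$. By Rasmussen, there is a spectral sequence with first page $\mathcal{H}(K)$ whose $i$-th differential $d_1^{(i)}$ changes degrees by $(q,a,t)\mapsto(q+2i,a-2i,t+2-2i)$, converging to a one-dimensional space supported in tridegree $(q,a,t)=(S,-S,-S)$ (hence in $\Delta$-grading $-S$); this integer $S=S(K)$ is the HOMFLY-PT $S$-invariant. Write $d_1=d_1^{(1)}$. $K$ is $d_1$-standard if $d_1^{(i)}=0$ for all $i\ge 2$. *)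

(* Defs.v *)
(* Abstract model of Rasmussen's HOMFLY-PT -> sl(1) spectral
   sequence attached to a knot, at the level of (finite-dimensional) graded
   vector spaces over Q and matrices representing the page differentials. *)
From mathcomp Require Import all_boot all_order all_algebra.
Set Implicit Arguments. Unset Strict Implicit. Unset Printing Implicit Defensive.
Import Order.TTheory GRing.Theory Num.Theory.
Local Open Scope ring_scope.

Definition tri := (int * int * int)%type.

Definition sh (i : nat) (g : tri) : tri :=
  let: (q, a, t) := g in (q + 2 * i%:Z, a - 2 * i%:Z, t + 2 - 2 * i%:Z).

Definition unsh (i : nat) (g : tri) : tri :=
  let: (q, a, t) := g in (q - 2 * i%:Z, a + 2 * i%:Z, t - 2 + 2 * i%:Z).

(* A spectral sequence of trigraded finite-dimensional Q-vector spaces: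
   page i (i >= 1) in tridegree g is Q^(E i g) (row vectors), and the
   differential d^(i) on page i from tridegree g is the matrix D i g
   (acting on row vectors by v |-> v *m D i g). *)
Record trigraded_ss := TrigradedSS {
  E : nat -> tri -> nat;
  D : forall (i : nat) (g : tri), 'M[rat]_(E i g, E i (sh i g))
}.

Definition finite_even_page1 (X : trigraded_ss) : Prop :=
  (exists B : int, forall q a t, (E X 1 (q, a, t) != 0)%N ->
       [/\ `|q| <= B, `|a| <= B & `|t| <= B]) /\
  (forall q a t, (E X 1 (q, a, t) != 0)%N ->
       [/\ ~~ odd `|q|%N, ~~ odd `|a|%N & ~~ odd `|t|%N]).

(* Page i+1 is (up to isomorphism of trigraded spaces, i.e.
   dimensionwise) the homology of (page i, d^(i)). *)
Definition HOMFLY_SS (X : trigraded_ss) (S : int) : Prop :=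
  [/\ finite_even_page1 X,
      (forall i g, (1 <= i)%N -> D X i g *m D X i (sh i g) = 0),
      (forall i g, (1 <= i)%N ->
          E X i.+1 g = (E X i g - \rank (D X i g) - \rank (D X i (unsh i g)))%N)
    & exists N : nat, forall k g, (N <= k)%N ->
          E X k g = nat_of_bool (g == (S, - S, - S))].

Definition d1_standard (X : trigraded_ss) : Prop :=
  forall i g, (2 <= i)%N -> D X i g = 0.

(* Main.v *)
Require Import Defs.
From mathcomp Require Import all_boot all_order all_algebra.
From mathcomp Require Import zify.
Import Order.TTheory GRing.Theory Num.Theory.
Local Open Scope ring_scope.

Lemma line (f c : int -> int) (B k0 : int) :
  (forall k, B < k \/ k < - B -> f k = 0) -> (forall k, f k + f (k - 2) = c k) ->
  (forall k, k != k0 -> c k = 0) -> (forall k, f k = 0) /\ c k0 = 0.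
Proof.
move=> Hb Hr Hc.
have low : forall n : nat, forall k, k < k0 -> k <= - B - 1 + n%:Z -> f k = 0.
  elim=> [|n IH] k hk hkn.
    by apply: Hb; right; lia.
  case: (lerP k (- B - 1 + n%:Z)) => h; first exact: IH.
  have e := Hr k; rewrite Hc in e; last by apply/eqP; lia.
  rewrite (IH (k - 2)) in e; lia.
have high : forall n : nat, forall k, k0 - 2 < k -> B + 1 - n%:Z <= k -> f k = 0.
  elim=> [|n IH] k hk hkn.
    by apply: Hb; left; lia.
  case: (lerP (B + 1 - n%:Z) k) => h; first exact: IH.
  have e := Hr (k + 2); rewrite Hc in e; last by apply/eqP; lia.
  have -> : k = k + 2 - 2 by lia.
  rewrite (IH (k + 2)) ?add0r in e; [exact: e | lia | lia].
have all0 : forall k, f k = 0.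
  move=> k; case: (ltrP k k0) => h.
    by apply: (low (absz (k + B + 1)) k); lia.
  have H := high (absz (k - B - 1)%R) k. apply: H; lia.
split => //; by rewrite -Hr !all0.
Qed.

Lemma shunsh g : sh 1 (unsh 1 g) = g.
Proof. case: g => [[q a] t]; rewrite /sh /unsh; congr (_, _, _); lia. Qed.

Lemma unshL (c t k : int) : unsh 1 (k, c - k, t) = (k - 2, c - (k - 2), t).
Proof. rewrite /unsh; congr (_, _, _); lia. Qed.

Lemma E2_eq X S : HOMFLY_SS X S -> d1_standard X ->
  forall g, E X 2 g = nat_of_bool (g == (S, - S, - S)).
Proof.
case=> _ _ Hrec [N HN] Hd g.
have H : forall n, E X (n + 2) g = E X 2 g.
  elim=> // n IH; rewrite addSn Hrec; last by rewrite addn2.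
  have Z : forall g', D X (n + 2) g' = 0 by move=> g'; apply: Hd; rewrite leq_addl.
  by rewrite !Z !mxrank0 !subn0.
by rewrite -(H N) HN // leq_addr.
Qed.

Lemma key X S : HOMFLY_SS X S -> d1_standard X ->
  forall g, (nat_of_bool (g == (S, - S, - S)) + \rank (D X 1 g)
     + \rank (D X 1 (unsh 1 g)) = E X 1 g)%N.
Proof.
move=> HX Hd g; rewrite -(E2_eq _ _ HX Hd).
case: HX => _ Hc Hrec _.
have := mulmx0_rank_max (Hc 1%N (unsh 1 g) isT).
set r := \rank (D X 1 (unsh 1 g)).
rewrite shunsh => Hle.
rewrite (Hrec 1%N g isT). lia.
Qed.

Lemma le0 (n m : nat) : (n <= m)%N -> m = 0%N -> n = 0%N.
Proof. by move=> h e; move: h; rewrite e leqn0 => /eqP. Qed.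

Lemma arith (eX eY hx hy rx ry rx' ry' : nat) : eX = eY ->
  (hy + ry + ry')%N = eY -> (hx + rx + rx')%N = eX ->
  (rx%:Z - ry%:Z) + (rx'%:Z - ry'%:Z) = hy%:Z - hx%:Z.
Proof. lia. Qed.

Lemma sub0eq (a b : nat) : a%:Z - b%:Z = 0 -> a = b.
Proof. lia. Qed.

Theorem lemma2p17 (X Y : trigraded_ss) (S1 S2 : int) :
  HOMFLY_SS X S1 -> HOMFLY_SS Y S2 ->
  d1_standard X -> d1_standard Y ->
  (forall g, E X 1 g = E Y 1 g) ->
  S1 = S2 /\ (forall g, \rank (D X 1 g) = \rank (D Y 1 g)).
Proof.
move=> HX HY dX dY HE.
have kX := key _ _ HX dX; have kY := key _ _ HY dY.
have [[B HB] _] : finite_even_page1 X by case: HX.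
have LA : forall (c t k0 : int),
   (forall k, k != k0 -> nat_of_bool ((k, c - k, t) == (S1, - S1, - S1))
                      = nat_of_bool ((k, c - k, t) == (S2, - S2, - S2))) ->
   (forall k, \rank (D X 1 (k, c - k, t)) = \rank (D Y 1 (k, c - k, t))) /\
   nat_of_bool ((k0, c - k0, t) == (S1, - S1, - S1))
     = nat_of_bool ((k0, c - k0, t) == (S2, - S2, - S2)).
  move=> c t k0 Hk.
  pose f := (fun k => (\rank (D X 1 (k, c - k, t)))%:Z - (\rank (D Y 1 (k, c - k, t)))%:Z).
  pose cc := (fun k => (nat_of_bool ((k, c - k, t) == (S2, - S2, - S2)))%:Z
            - (nat_of_bool ((k, c - k, t) == (S1, - S1, - S1)))%:Z).
  have P1 : forall k, B < k \/ k < - B -> f k = 0.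
    move=> k hk.
    have E0 : E X 1 (k, c - k, t) = 0%N.
      apply/eqP; apply: contraT => /HB [hq _ _].
      move: hq; rewrite ler_norml; lia.
    have r1 := rank_leq_row (D X 1 (k, c - k, t)).
    have r2 : (\rank (D Y 1 (k, (c - k)%R, t)) <= E X 1 (k, (c - k)%R, t))%N.
      by rewrite HE; exact: rank_leq_row.
    rewrite /f /= (le0 _ _ r1 E0) (le0 _ _ r2 E0) //.
  have P2 : forall k, f k + f (k - 2) = cc k.
    move=> k; rewrite /f /cc; have := kX (k, c - k, t); have := kY (k, c - k, t).
    have := HE (k, c - k, t); rewrite unshL => e1 e2 e3; exact: arith e1 e2 e3.
  have P3 : forall k, k != k0 -> cc k = 0.
    by move=> k /Hk; rewrite /cc => ->; rewrite subrr.
  have [H1 H2] := line _ _ _ _ P1 P2 P3.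
  split; last exact: esym (sub0eq _ _ H2).
  by move=> k; exact: sub0eq _ _ (H1 k).
have eS : S1 = S2.
  case: (eqVneq S1 S2) => // ne.
  have nn : (- S1 == - S2) = false.
    by apply/eqP => e; move/eqP: ne; apply; lia.
  have h0 : forall k, k != S1 -> nat_of_bool ((k, 0 - k, - S1) == (S1, - S1, - S1))
                      = nat_of_bool ((k, 0 - k, - S1) == (S2, - S2, - S2)).
    move=> k nk.
    by rewrite !xpair_eqE (negbTE nk) nn andbF.
  have [_ h] := LA 0 (- S1) S1 h0.
  by move: h; rewrite !xpair_eqE !eqxx sub0r eqxx nn andbF.
subst S2; split => //.
move=> [[q a] t].
have [h _] := LA (q + a) t 0 (fun _ _ => erefl).
have := h q; have -> : q + a - q = a by lia.
done.
Qed.
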